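(* Let $G$ be a group, $\nu$ a conjugation-invariant pseudo-norm on $G$, and $H\in\mathsf{FM}(G)$. For any $\hat\phi\in L(G,\nu)$, the function $\phi\colon G\to\mathbb{R}$, $\phi(g)=\hat\phi([g^1])$, is a homogeneous $H$-quasimorphism, and $D(\phi)\le 8\,l(\hat\phi)\cdot E_{H,\nu}(H)$, where $l(\hat\phi)$ is the optimal Lipschitz constant of $\hat\phi$.
   Context: A conjugation-invariant pseudo-norm on a group $G$ is a function $\nu\colon G\to\mathbb{R}_{\ge0}$ with $\nu(1)=0$, $\nu(f)=\nu(f^{-1})$, $\nu(fg)\le\nu(f)+\nu(g)$ and $\nu(gfg^{-1})=\nu(f)$ for all $f,g\in G$. For a subgroup $H\le G$, $\nu_H(f)$ is the minimal $k$ such that $f=g_1h_1g_1^{-1}\cdots g_kh_kg_k^{-1}$ ($g_i\in G,h_i\in H$), $\infty$ if none. A function $\phi\colon G\to\mathbb{R}$ is an $H$-quasimorphism if there is $C>0$ with $|\phi(fg)-\phi(f)-\phi(g)|<C\min\{\nu_H(f),\nu_H(g)\}$ for all $f,g$; the infimum of such $C$ is $D(\phi)$; $\phi$ is homogeneous if $\phi(f^n)=n\phi(f)$ for all $n\in\mathbb{Z}$. For $K\subset G$, $\mathrm{D}^f_H(K)$ is the set of $h_0\in G$ such that for all $g_1,\dots,g_k\in G$ there is $h\in G$ with every element of $hh_0h^{-1}K(hh_0h^{-1})^{-1}$ commuting with every element of $\bigcup_i g_iHg_i^{-1}$; $E_{H,\nu}(K)=\inf_{h_0\in\mathrm{D}^f_H(K)}\nu(h_0)$.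 $(G,H)$ satisfies $\mathsf{FM}$ if $\nu_H<\infty$ on $G$ and $\mathrm{D}^f_H(h_1Hh_1^{-1}\cup\dots\cup h_kHh_k^{-1})\ne\emptyset$ for all $h_1,\dots,h_k\in G$; $\mathsf{FM}(G)$ is the set of such subgroups $H$. $A_G=\coprod_{k\ge0}(G\times\mathbb{R})^k$, elements written as formal words $g_1^{s_1}\cdots g_k^{s_k}$, empty word $1$; $\mathtt{g}\cdot\mathtt{h}$ is concatenation, $\bar{\mathtt{g}}=g_k^{-s_k}\cdots g_1^{-s_1}$, $\mathtt{g}^{(\lambda)}=g_1^{\lambda s_1}\cdots g_k^{\lambda s_k}$; $\|\mathtt{g}\|_\nu=\lim_{n\to\infty}\frac1n\nu(g_1^{[s_1n]}\cdots g_k^{[s_kn]})$ ($[\cdot]$ integer part), $\|1\|_\nu=0$; $\mathtt{g}\sim\mathtt{h}$ iff $\|\mathtt{g}\cdot\bar{\mathtt{h}}\|_\nu=0$; $A_\nu=A_G/\sim$ is a real normed vector space with $[\mathtt{g}]+[\mathtt{h}]=[\mathtt{g}\cdot\mathtt{h}]$, $\lambda[\mathtt{g}]=[\mathtt{g}^{(\lambda)}]$, norm $\|[\mathtt{g}]\|_\nu=\|\mathtt{g}\|_\nu$. $L(G,\nu)$ is the set of Lipschitz continuous linear maps $A_\nu\to\mathbb{R}$; $[g^1]$ is the class of the one-letter word $g^1$. *)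

(* Defs.v *)
From Stdlib Require Import Reals List ZArith.
From Coquelicot Require Import Coquelicot.
Open Scope R_scope.

Record Grp := {
  gcar :> Type;
  gmul : gcar -> gcar -> gcar;
  gone : gcar;
  ginv : gcar -> gcar;
  gmulA : forall x y z, gmul x (gmul y z) = gmul (gmul x y) z;
  gmul1l : forall x, gmul gone x = x;
  gmul1r : forall x, gmul x gone = x;
  gmulVl : forall x, gmul (ginv x) x = gone;
  gmulVr : forall x, gmul x (ginv x) = gone
}.
Arguments gmul {G} : rename.
Arguments gone {G} : rename.
Arguments ginv {G} : rename.

Section GroupDefs.
Variable G : Grp.

Definition gconj (a b : G) : G := gmul (gmul a b) (ginv a).

Definition gcommute (a b : G) : Prop := gmul a b = gmul b a.

Fixpoint gnpow (g : G) (n : nat) : G :=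
  match n with O => gone | S m => gmul g (gnpow g m) end.

Definition gzpow (g : G) (z : Z) : G :=
  match z with
  | Z0 => gone
  | Zpos p => gnpow g (Pos.to_nat p)
  | Zneg p => ginv (gnpow g (Pos.to_nat p))
  end.

Definition conj_inv_pseudo_norm (nu : G -> R) : Prop :=
  (forall f, 0 <= nu f) /\
  nu gone = 0 /\
  (forall f, nu f = nu (ginv f)) /\
  (forall f g, nu (gmul f g) <= nu f + nu g) /\
  (forall f g, nu (gconj g f) = nu f).

Definition is_subgroup (H : G -> Prop) : Prop :=
  H gone /\ (forall x y, H x -> H y -> H (gmul x y)) /\ (forall x, H x -> H (ginv x)).

Definition conj_prod_len (H : G -> Prop) (f : G) (k : nat) : Prop :=
  exists l : list (G * G),
    length l = k /\ List.Forall (fun p => H (snd p)) l /\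
    f = fold_right (fun p acc => gmul (gconj (fst p) (snd p)) acc) gone l.

(* nu_H(f): minimal such k, +oo if none (Glb of the empty set is +oo) *)
Definition nuH (H : G -> Prop) (f : G) : Rbar :=
  Glb_Rbar (fun x => exists k, conj_prod_len H f k /\ x = INR k).

Definition qm_ineq (H : G -> Prop) (phi : G -> R) (C : R) : Prop :=
  forall f g, Rbar_le (Finite (Rabs (phi (gmul f g) - phi f - phi g)))
                      (Rbar_mult (Finite C) (Rbar_min (nuH H f) (nuH H g))).

Definition H_quasimorphism (H : G -> Prop) (phi : G -> R) : Prop :=
  exists C, 0 < C /\ qm_ineq H phi C.

Definition Dqm (H : G -> Prop) (phi : G -> R) : Rbar :=
  Glb_Rbar (fun C => 0 < C /\ qm_ineq H phi C).

Definition homogeneous (phi : G -> R) : Prop :=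
  forall g (n : Z), phi (gzpow g n) = IZR n * phi g.

Definition DfH (H : G -> Prop) (K : G -> Prop) (h0 : G) : Prop :=
  forall gs : list G, exists h : G,
    forall k, K k -> forall gi x, In gi gs -> H x ->
      gcommute (gconj (gconj h h0) k) (gconj gi x).

Definition EHnu (nu : G -> R) (H : G -> Prop) (K : G -> Prop) : Rbar :=
  Glb_Rbar (fun x => exists h0, DfH H K h0 /\ x = nu h0).

Definition FM (H : G -> Prop) : Prop :=
  is_subgroup H /\
  (forall f, nuH H f <> p_infty) /\
  (forall hs : list G, exists h0,
      DfH H (fun y => exists hi x, In hi hs /\ H x /\ y = gconj hi x) h0).

(* A_G : formal words g_1^{s_1} ... g_k^{s_k} *)
Definition word := list (G * R).

Definition wbar (w : word) : word := rev (map (fun p => (fst p, - snd p)) w).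

Definition wscale (l : R) (w : word) : word := map (fun p => (fst p, l * snd p)) w.

(* g_1^{[s_1 n]} ... g_k^{[s_k n]}  ([.] = integer part, floor) *)
Definition wprod (n : nat) (w : word) : G :=
  fold_right (fun p acc => gmul (gzpow (fst p) (Int_part (snd p * INR n))) acc) gone w.

Definition wnorm (nu : G -> R) (w : word) : R :=
  real (Lim_seq (fun n => nu (wprod n w) / INR n)).

(* psi : A_G -> R represents a map A_nu -> R that is linear
   ([g]+[h] = [g.h], lambda [g] = [g^(lambda)]) and Lipschitz
   for the norm of A_nu (||[g]-[h]|| = ||g . hbar||) with constant C *)
Definition lip_with (nu : G -> R) (psi : word -> R) (C : R) : Prop :=
  0 <= C /\ forall w v, Rabs (psi w - psi v) <= C * wnorm nu (w ++ wbar v).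

Definition in_L (nu : G -> R) (psi : word -> R) : Prop :=
  (forall w v, psi (w ++ v) = psi w + psi v) /\
  (forall l w, psi (wscale l w) = l * psi w) /\
  (exists C, lip_with nu psi C).

Definition lip_const (nu : G -> R) (psi : word -> R) : Rbar :=
  Glb_Rbar (fun C => lip_with nu psi C).

End GroupDefs.

Arguments gconj {G}.
Arguments gzpow {G}.

(* Main.v *)
Require Import Defs.
From Stdlib Require Import Reals List ZArith Lia Lra Classical.
From Coquelicot Require Import Coquelicot.
Open Scope R_scope.

Arguments gmulA {_} x y z.
Arguments gmul1l {_} x.
Arguments gmul1r {_} x.
Arguments gmulVl {_} x.
Arguments gmulVr {_} x.

Section Grp.
Variable G : Grp.

Lemma mulKV (a b : G) : gmul (gmul a b) (ginv b) = a.
Proof. rewrite <- gmulA, gmulVr, gmul1r. reflexivity. Qed.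
Lemma mulVK (a b : G) : gmul (gmul a (ginv b)) b = a.
Proof. rewrite <- gmulA, gmulVl, gmul1r. reflexivity. Qed.
Lemma mul_left_cancel (a b c : G) : gmul a b = gmul a c -> b = c.
Proof. intro E. rewrite <- (gmul1l b), <- (gmul1l c), <- (gmulVl a), <- !gmulA, E. reflexivity. Qed.
Lemma ginv_uniq (a b : G) : gmul a b = gone -> b = ginv a.
Proof. intro E. apply (mul_left_cancel a). rewrite E, gmulVr. reflexivity. Qed.
Lemma ginv_mul (a b : G) : ginv (gmul a b) = gmul (ginv b) (ginv a).
Proof. symmetry. apply ginv_uniq. rewrite gmulA, mulKV, gmulVr. reflexivity. Qed.
Lemma ginv_inv (a : G) : ginv (ginv a) = a.
Proof. symmetry. apply ginv_uniq. apply gmulVl. Qed.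
Lemma ginv_one : ginv (@gone G) = gone.
Proof. symmetry. apply ginv_uniq. apply gmul1l. Qed.

Ltac gs := unfold gconj; repeat (rewrite ?ginv_mul, ?ginv_inv, ?ginv_one, ?gmulA, ?gmul1l, ?gmul1r, ?gmulVr, ?gmulVl, ?mulKV, ?mulVK).

Lemma gnpow_add (g : G) m n : gnpow G g (m + n) = gmul (gnpow G g m) (gnpow G g n).
Proof. induction m; simpl. - gs. reflexivity. - rewrite IHm. gs. reflexivity. Qed.

Lemma gnpow_comm (g : G) n : gmul g (gnpow G g n) = gmul (gnpow G g n) g.
Proof.
  replace (gmul (gnpow G g n) g) with (gnpow G g (n + 1)).
  - rewrite Nat.add_comm. reflexivity.
  - rewrite gnpow_add. simpl. gs. reflexivity.
Qed.

Lemma gzpow_nat (g : G) n : gzpow g (Z.of_nat n) = gnpow G g n.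
Proof. destruct n. reflexivity. simpl. rewrite SuccNat2Pos.id_succ. reflexivity. Qed.

Lemma gzpow_negnat (g : G) n : gzpow g (- Z.of_nat n) = ginv (gnpow G g n).
Proof. destruct n. simpl. gs. reflexivity. simpl. rewrite SuccNat2Pos.id_succ. reflexivity. Qed.

Lemma gzpow_succ (g : G) z : gzpow g (Z.succ z) = gmul g (gzpow g z).
Proof.
  destruct (Z_le_gt_dec 0 z).
  - rewrite <- (Z2Nat.id z) by lia. rewrite <- Nat2Z.inj_succ, !gzpow_nat. reflexivity.
  - destruct (Z.to_nat (- z)) as [|k] eqn:Ek; [lia|].
    replace z with (- Z.of_nat (S k))%Z by lia.
    replace (Z.succ (- Z.of_nat (S k))) with (- Z.of_nat k)%Z by lia.
    rewrite !gzpow_negnat. simpl. rewrite gnpow_comm. gs. reflexivity.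
Qed.

Lemma gzpow_add (g : G) a b : gzpow g (a + b) = gmul (gzpow g a) (gzpow g b).
Proof.
  revert b. induction a using Z.peano_ind; intro b.
  - simpl. gs. reflexivity.
  - replace (Z.succ a + b)%Z with (Z.succ (a + b)) by lia. rewrite !gzpow_succ, IHa. gs. reflexivity.
  - assert (E : forall z, gzpow g (Z.pred z) = gmul (ginv g) (gzpow g z)).
    { intro z. rewrite <- (Z.succ_pred z) at 2. rewrite gzpow_succ. gs. reflexivity. }
    replace (Z.pred a + b)%Z with (Z.pred (a + b)) by lia. rewrite !E, IHa. gs. reflexivity.
Qed.

Lemma gzpow_opp (g : G) a : gmul (gzpow g a) (gzpow g (- a)) = gone.
Proof. rewrite <- gzpow_add. replace (a + - a)%Z with 0%Z by lia. reflexivity. Qed.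

Lemma gzpow_mul_nat (g : G) a n : gnpow G (gzpow g a) n = gzpow g (a * Z.of_nat n).
Proof.
  induction n. - simpl. rewrite Z.mul_0_r. reflexivity.
  - simpl gnpow. rewrite IHn, <- gzpow_add. f_equal. lia.
Qed.

Lemma gnpow_comm2 (a b : G) n : gmul a b = gmul b a -> gmul (gnpow G a n) b = gmul b (gnpow G a n).
Proof. intro C. induction n; simpl. gs. reflexivity. rewrite <- gmulA, IHn, !gmulA, C. reflexivity. Qed.

Lemma gnpow_mul_comm (a b : G) n : gmul a b = gmul b a -> gnpow G (gmul a b) n = gmul (gnpow G a n) (gnpow G b n).
Proof.
  intro C. induction n; simpl. gs. reflexivity.
  rewrite IHn. rewrite <- !gmulA. f_equal. rewrite !gmulA. f_equal.
  symmetry. apply gnpow_comm2. auto.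
Qed.

End Grp.

Ltac gs := unfold gconj; repeat (rewrite ?ginv_mul, ?ginv_inv, ?ginv_one, ?gmulA, ?gmul1l, ?gmul1r, ?gmulVr, ?gmulVl, ?mulKV, ?mulVK).

Lemma Int_part_IZR z : Int_part (IZR z) = z.
Proof. symmetry. apply Int_part_spec. lra. Qed.

Lemma Int_nat n : Int_part (1 * INR n) = Z.of_nat n.
Proof. rewrite Rmult_1_l, INR_IZR_INZ. apply Int_part_IZR. Qed.
Lemma Int_negnat n : Int_part (- 1 * INR n) = (- Z.of_nat n)%Z.
Proof. replace (-1 * INR n) with (IZR (- Z.of_nat n)). apply Int_part_IZR.
  rewrite opp_IZR, <- INR_IZR_INZ. ring. Qed.

Section An.
Variable G : Grp.
Variable nu : G -> R.
Hypothesis Hnu : conj_inv_pseudo_norm G nu.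

Lemma nu_ge0 f : 0 <= nu f. Proof. apply Hnu. Qed.
Lemma nu_one : nu gone = 0. Proof. apply Hnu. Qed.
Lemma nu_inv f : nu f = nu (ginv f). Proof. apply Hnu. Qed.
Lemma nu_mul f g : nu (gmul f g) <= nu f + nu g. Proof. apply Hnu. Qed.
Lemma nu_conj f g : nu (gconj g f) = nu f. Proof. apply Hnu. Qed.

Lemma wnorm_le w K : 0 <= K -> (forall n, nu (wprod G n w) <= INR n * K) -> wnorm G nu w <= K.
Proof.
  intros HK Hb. unfold wnorm.
  assert (L : Rbar_le (Lim_seq (fun n => nu (wprod G n w) / INR n)) (Lim_seq (fun _ => K))).
  { apply Lim_seq_le_loc. exists 0%nat. intros n _.
    destruct n. simpl. unfold Rdiv. rewrite Rinv_0. lra.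
    specialize (Hb (S n)). assert (0 < INR (S n)) by (apply lt_0_INR; lia).
    apply Rmult_le_reg_r with (INR (S n)); auto. unfold Rdiv. rewrite Rmult_assoc, Rinv_l by lra. lra. }
  rewrite Lim_seq_const in L.
  destruct (Lim_seq _); simpl in *; lra.
Qed.

Lemma nu_pow_conj z c n : nu (gmul (gnpow G (gmul z c) n) (ginv (gnpow G c n))) <= INR n * nu z.
Proof.
  induction n.
  - simpl. rewrite gmul1l, ginv_one, nu_one. lra.
  - simpl gnpow. rewrite S_INR.
    replace (gmul (gmul (gmul z c) (gnpow G (gmul z c) n)) (ginv (gmul c (gnpow G c n))))
      with (gmul z (gconj c (gmul (gnpow G (gmul z c) n) (ginv (gnpow G c n))))) by (gs; reflexivity).
    eapply Rle_trans. apply nu_mul. rewrite nu_conj. lra.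
Qed.

Variable psi : word G -> R.
Hypothesis Hadd : forall w v, psi (w ++ v) = psi w + psi v.
Hypothesis Hsc : forall l w, psi (wscale G l w) = l * psi w.
Variable C : R.
Hypothesis HC : lip_with G nu psi C.

Definition phi (g : G) := psi ((g, 1) :: nil).

Lemma phi_lip a c : Rabs (phi a - phi c) <= C * nu (gmul a (ginv c)).
Proof.
  destruct HC as [C0 HL]. eapply Rle_trans. apply HL. apply Rmult_le_compat_l; auto.
  apply wnorm_le. apply nu_ge0. intro n. unfold wprod, wbar. simpl.
  rewrite Int_nat, Int_negnat, gzpow_nat, gzpow_negnat, gmul1r.
  pose proof (nu_pow_conj (gmul a (ginv c)) c n) as P. rewrite mulVK in P. exact P.
Qed.

Lemma phi_comm a b : gmul a b = gmul b a -> phi (gmul a b) = phi a + phi b.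
Proof.
  intro Cm. destruct HC as [C0 HL].
  specialize (HL ((gmul a b, 1) :: nil) ((a,1) :: (b,1) :: nil)).
  assert (W : wnorm G nu (((gmul a b, 1) :: nil) ++ wbar G ((a,1) :: (b,1) :: nil)) <= 0).
  { apply wnorm_le. lra. intro n. unfold wprod, wbar. simpl.
    rewrite Int_nat, !Int_negnat, gzpow_nat, !gzpow_negnat, gmul1r, gnpow_mul_comm by auto.
    gs. rewrite nu_one. lra. }
  assert (Hw : psi ((a, 1) :: (b, 1) :: nil) = phi a + phi b).
  { unfold phi. rewrite <- Hadd. reflexivity. }
  rewrite Hw in HL. fold (phi (gmul a b)) in HL.
  assert (C * wnorm G nu (((gmul a b, 1) :: nil) ++ wbar G ((a,1) :: (b,1) :: nil)) <= 0).
  { rewrite <- (Rmult_0_r C). apply Rmult_le_compat_l; auto. }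
  pose proof (Rabs_pos (phi (gmul a b) - (phi a + phi b))).
  assert (Rabs (phi (gmul a b) - (phi a + phi b)) = 0) by lra.
  apply Rabs_eq_0 in H1. lra.
Qed.

Lemma phi_one : phi gone = 0.
Proof. pose proof (phi_comm gone gone eq_refl). rewrite gmul1l in H. lra. Qed.

Lemma phi_hom g n : phi (gzpow g n) = IZR n * phi g.
Proof.
  destruct HC as [C0 HL].
  specialize (HL ((gzpow g n, 1) :: nil) (wscale G (IZR n) ((g,1)::nil))).
  rewrite Hsc in HL. fold (phi (gzpow g n)) in HL. fold (phi g) in HL.
  assert (W : wnorm G nu (((gzpow g n, 1) :: nil) ++ wbar G (wscale G (IZR n) ((g,1) :: nil))) <= 0).
  { apply wnorm_le. lra. intro m. unfold wprod, wbar, wscale. simpl.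
    rewrite Int_nat, gzpow_nat, gmul1r, gzpow_mul_nat.
    replace (- (IZR n * 1) * INR m) with (IZR (- (n * Z.of_nat m))).
    2:{ rewrite opp_IZR, mult_IZR, <- INR_IZR_INZ. ring. }
    rewrite Int_part_IZR, gzpow_opp, nu_one. lra. }
  assert (C * wnorm G nu (((gzpow g n, 1) :: nil) ++ wbar G (wscale G (IZR n) ((g,1) :: nil))) <= 0).
  { rewrite <- (Rmult_0_r C). apply Rmult_le_compat_l; auto. }
  pose proof (Rabs_pos (phi (gzpow g n) - IZR n * phi g)).
  assert (Rabs (phi (gzpow g n) - IZR n * phi g) = 0) by lra.
  apply Rabs_eq_0 in H1. lra.
Qed.

End An.


Section Key.
Variable G : Grp.
Variable nu : G -> R.
Hypothesis Hnu : conj_inv_pseudo_norm G nu.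
Variable H : G -> Prop.
Variable psi : word G -> R.
Hypothesis Hadd : forall w v, psi (w ++ v) = psi w + psi v.
Variable C : R.
Hypothesis HC : lip_with G nu psi C.
Variable h0 : G.
Hypothesis Hh0 : DfH G H H h0.
Hypothesis Hdec : forall h : G, exists l : list (G * G)%type, List.Forall (fun p => H (snd p)) l /\
   h = fold_right (fun p acc => gmul (gconj (fst p) (snd p)) acc) gone l.

Lemma comm_conj (a b c : G) : gcommute G a b -> gcommute G (gconj c a) (gconj c b).
Proof. unfold gcommute. intro E. replace (gmul (gconj c a) (gconj c b)) with (gconj c (gmul a b)) by (gs; reflexivity).
  rewrite E. gs. reflexivity. Qed.

Lemma comm_mul (y a b : G) : gcommute G y a -> gcommute G y b -> gcommute G y (gmul a b).
Proof. unfold gcommute. intros E1 E2. rewrite gmulA, E1, <- gmulA, E2, gmulA. reflexivity. Qed.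

Lemma key_y c z h : H z -> exists y, gcommute G y h /\ nu (gmul (gconj c z) (ginv y)) <= 2 * nu h0.
Proof.
  intro Hz. destruct (Hdec h) as [l [Hl Eh]].
  destruct (Hh0 (map (fun p => gmul (ginv c) (fst p)) l)) as [h' Hh'].
  set (t := gconj h' h0).
  exists (gconj c (gconj t z)). split.
  - subst h. clear -Hl Hh' Hz. induction l as [|p l IH]; simpl.
    + unfold gcommute. gs. reflexivity.
    + inversion Hl; subst. apply comm_mul.
      * replace (gconj (fst p) (snd p)) with (gconj c (gconj (gmul (ginv c) (fst p)) (snd p))) by (gs; reflexivity).
        apply comm_conj. apply Hh'; auto. simpl. auto.
      * apply IH; auto. intros k Hk gi x Hi Hx. apply Hh'; auto. simpl; auto.
  - replace (gmul (gconj c z) (ginv (gconj c (gconj t z)))) with (gconj c (gmul (gconj z t) (ginv t))) by (gs; reflexivity).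
    rewrite (nu_conj G nu Hnu). eapply Rle_trans. apply (nu_mul G nu Hnu).
    rewrite (nu_conj G nu Hnu), <- (nu_inv G nu Hnu). unfold t. rewrite (nu_conj G nu Hnu). lra.
Qed.

Lemma C_ge0 : 0 <= C. Proof. apply HC. Qed.

Lemma key1 c z h : H z ->
  Rabs (phi G psi (gmul (gconj c z) h) - phi G psi (gconj c z) - phi G psi h) <= 4 * C * nu h0.
Proof.
  intro Hz. destruct (key_y c z h Hz) as [y [Cy Ny]]. set (x := gconj c z) in *.
  pose proof (phi_lip G nu Hnu psi C HC (gmul x h) (gmul y h)) as P1.
  replace (gmul (gmul x h) (ginv (gmul y h))) with (gmul x (ginv y)) in P1 by (gs; reflexivity).
  pose proof (phi_lip G nu Hnu psi C HC y x) as P2.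
  replace (gmul y (ginv x)) with (ginv (gmul x (ginv y))) in P2 by (gs; reflexivity).
  rewrite <- (nu_inv G nu Hnu) in P2.
  rewrite (phi_comm G nu Hnu psi Hadd C HC y h Cy) in P1.
  pose proof C_ge0.
  assert (C * nu (gmul x (ginv y)) <= C * (2 * nu h0)) by (apply Rmult_le_compat_l; auto).
  revert P1 P2. unfold Rabs. repeat destruct Rcase_abs; intros; lra.
Qed.

Lemma key2 c z h : H z ->
  Rabs (phi G psi (gmul h (gconj c z)) - phi G psi h - phi G psi (gconj c z)) <= 4 * C * nu h0.
Proof.
  intro Hz. destruct (key_y c z h Hz) as [y [Cy Ny]]. set (x := gconj c z) in *.
  pose proof (phi_lip G nu Hnu psi C HC (gmul h x) (gmul h y)) as P1.
  replace (gmul (gmul h x) (ginv (gmul h y))) with (gconj h (gmul x (ginv y))) in P1 by (gs; reflexivity).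
  rewrite (nu_conj G nu Hnu) in P1.
  pose proof (phi_lip G nu Hnu psi C HC y x) as P2.
  replace (gmul y (ginv x)) with (ginv (gmul x (ginv y))) in P2 by (gs; reflexivity).
  rewrite <- (nu_inv G nu Hnu) in P2.
  unfold gcommute in Cy. rewrite <- Cy in P1.
  rewrite (phi_comm G nu Hnu psi Hadd C HC y h) in P1 by auto.
  pose proof C_ge0.
  assert (C * nu (gmul x (ginv y)) <= C * (2 * nu h0)) by (apply Rmult_le_compat_l; auto).
  revert P1 P2. unfold Rabs. repeat destruct Rcase_abs; intros; lra.
Qed.

Definition dfc f g := phi G psi (gmul f g) - phi G psi f - phi G psi g.

Lemma tele_left l : List.Forall (fun p => H (snd p)) l -> forall g,
  Rabs (dfc (fold_right (fun p acc => gmul (gconj (fst p) (snd p)) acc) gone l) g)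
   <= 8 * C * nu h0 * INR (length l).
Proof.
  unfold dfc. induction 1 as [|p l Hp Hl IH]; intro g; simpl fold_right.
  - rewrite gmul1l, (phi_one G nu Hnu psi Hadd C HC). simpl length. replace (_ - _ - _) with 0 by ring. rewrite Rabs_R0. simpl INR. lra.
  - set (f' := fold_right _ _ l) in *. simpl length. rewrite S_INR.
    rewrite <- gmulA.
    pose proof (key1 (fst p) (snd p) (gmul f' g) Hp).
    pose proof (key1 (fst p) (snd p) f' Hp).
    specialize (IH g).
    revert H0 H1 IH. unfold Rabs. repeat destruct Rcase_abs; intros; lra.
Qed.

Lemma tele_right l : List.Forall (fun p => H (snd p)) l -> forall f,
  Rabs (dfc f (fold_right (fun p acc => gmul (gconj (fst p) (snd p)) acc) gone l))
   <= 8 * C * nu h0 * INR (length l).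
Proof.
  unfold dfc. induction 1 as [|p l Hp Hl IH]; intro f; simpl fold_right.
  - rewrite gmul1r, (phi_one G nu Hnu psi Hadd C HC). simpl length. replace (_ - _ - _) with 0 by ring. rewrite Rabs_R0. simpl INR. lra.
  - set (g' := fold_right _ _ l) in *. simpl length. rewrite S_INR.
    rewrite gmulA.
    pose proof (key2 (fst p) (snd p) f Hp).
    pose proof (key1 (fst p) (snd p) g' Hp).
    specialize (IH (gmul f (gconj (fst p) (snd p)))).
    revert H0 H1 IH. unfold Rabs. repeat destruct Rcase_abs; intros; lra.
Qed.

Lemma defect_bound f g k : (conj_prod_len G H f k \/ conj_prod_len G H g k) ->
  Rabs (dfc f g) <= 8 * C * nu h0 * INR k.
Proof.
  intros [[l [Hk [Hl Ef]]] | [l [Hk [Hl Ef]]]]; subst.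
  - apply tele_left; auto.
  - apply tele_right; auto.
Qed.

End Key.

Lemma glb_fin (E : R -> Prop) x0 : E x0 -> (forall x, E x -> 0 <= x) ->
  exists m, Glb_Rbar E = Finite m /\ 0 <= m /\ (forall x, E x -> m <= x) /\
            (forall r, (forall x, E x -> r <= x) -> r <= m).
Proof.
  intros Hx0 Hlb. destruct (Glb_Rbar_correct E) as [lb gl].
  assert (A := lb x0 Hx0).
  assert (B := gl (Finite 0) (fun x Hx => Hlb x Hx)).
  destruct (Glb_Rbar E) as [m| |]; simpl in A, B; try contradiction.
  exists m. split; auto. split; auto. split.
  - intros x Hx. exact (lb x Hx).
  - intros r Hr. exact (gl (Finite r) (fun x Hx => Hr x Hx)).
Qed.

Lemma glb_nonempty (E : R -> Prop) : Glb_Rbar E <> p_infty -> exists x, E x.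
Proof.
  intro Hn. apply NNPP. intro Ne. apply Hn.
  destruct (Glb_Rbar_correct E) as [lb gl].
  assert (Rbar_le p_infty (Glb_Rbar E)).
  { apply gl. intros x Hx. exfalso. apply Ne. eauto. }
  destruct (Glb_Rbar E); simpl in H; tauto.
Qed.

Lemma glb_approx (E : R -> Prop) m eps : 0 < eps ->
  (forall r, (forall x, E x -> r <= x) -> r <= m) -> exists x, E x /\ x < m + eps.
Proof.
  intros He Hg. apply NNPP. intro N.
  assert (m + eps <= m); [|lra].
  apply Hg. intros x Hx. apply Rnot_lt_le. intro L. apply N. eauto.
Qed.

Section Main.
Variable G : Grp.
Variable nu : G -> R.
Hypothesis Hnu : conj_inv_pseudo_norm G nu.
Variable H : G -> Prop.
Hypothesis HFM : FM G H.
Variable psi : word G -> R.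
Hypothesis Hadd : forall w v, psi (w ++ v) = psi w + psi v.

Lemma Hdec : forall h : G, exists l : list (G * G)%type, List.Forall (fun p => H (snd p)) l /\
   h = fold_right (fun p acc => gmul (gconj (fst p) (snd p)) acc) gone l.
Proof.
  intro h. destruct HFM as [_ [Hfin _]].
  destruct (glb_nonempty _ (Hfin h)) as [x [k [[l [_ [Hl E]]] _]]].
  exists l. auto.
Qed.

Lemma nuH_fin f : exists m, nuH G H f = Finite m /\ 0 <= m /\
   (forall r, (forall k, conj_prod_len G H f k -> r <= INR k) -> r <= m).
Proof.
  destruct HFM as [_ [Hfin _]].
  destruct (glb_nonempty _ (Hfin f)) as [x Hx].
  destruct (glb_fin (fun x => exists k, conj_prod_len G H f k /\ x = INR k) x Hx) as [m [E1 [E2 [_ E4]]]].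
  { intros y [k [_ ->]]. apply pos_INR. }
  exists m. unfold nuH. split; auto. split; auto.
  intros r Hr. apply E4. intros y [k [Hk ->]]. auto.
Qed.

Lemma qm_from l' h0 : lip_with G nu psi l' -> DfH G H H h0 ->
  forall C, 0 < C -> 8 * l' * nu h0 <= C -> qm_ineq G H (phi G psi) C.
Proof.
  intros Hl Hh0 C HC HB f g.
  destruct (nuH_fin f) as [mf [Ef [Pf Gf]]].
  destruct (nuH_fin g) as [mg [Eg [Pg Gg]]].
  rewrite Ef, Eg. simpl.
  set (d := Rabs (phi G psi (gmul f g) - phi G psi f - phi G psi g)).
  assert (Hd : forall k, conj_prod_len G H f k \/ conj_prod_len G H g k -> d / C <= INR k).
  { intros k Hk. pose proof (defect_bound G nu Hnu H psi Hadd l' Hl h0 Hh0 Hdec f g k Hk) as P.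
    unfold dfc in P. fold d in P.
    apply Rmult_le_reg_r with C; auto. unfold Rdiv. rewrite Rmult_assoc, Rinv_l by lra.
    rewrite Rmult_1_r. eapply Rle_trans; [exact P|]. rewrite (Rmult_comm (INR k)).
    apply Rmult_le_compat_r; auto. apply pos_INR. }
  assert (A1 : d / C <= mf) by (apply Gf; intros; apply Hd; auto).
  assert (A2 : d / C <= mg) by (apply Gg; intros; apply Hd; auto).
  assert (B : d / C <= Rmin mf mg) by (apply Rmin_glb; auto).
  apply Rmult_le_compat_l with (r := C) in B; [|lra].
  unfold Rdiv in B. rewrite <- Rmult_assoc, (Rmult_comm C d), Rmult_assoc, Rinv_r, Rmult_1_r in B by lra.
  exact B.
Qed.

End Main.

Theorem proposition2p5 (G : Grp) (nu : G -> R) (H : G -> Prop) (psi : word G -> R) :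
  conj_inv_pseudo_norm G nu ->
  FM G H ->
  in_L G nu psi ->
  let phi := fun g : G => psi ((g, 1) :: nil) in
  homogeneous G phi /\ H_quasimorphism G H phi /\
  Rbar_le (Dqm G H phi)
          (Rbar_mult (Finite 8) (Rbar_mult (lip_const G nu psi) (EHnu G nu H H))).
Proof.
  intros Hnu HFM [Hadd [Hsc [C0 HC0]]] phi.
  assert (Hex : exists h0, DfH G H H h0).
  { destruct HFM as [_ [_ Hd]]. destruct (Hd (gone :: nil)) as [h0 Hh0].
    exists h0. intro gs0. destruct (Hh0 gs0) as [h Hh]. exists h.
    intros k Hk gi x Hi Hx. apply Hh; auto. exists gone, k. split; [simpl; auto|]. split; auto.
    unfold gconj. rewrite ginv_one, gmul1l, gmul1r. reflexivity. }
  destruct Hex as [h0 Hh0].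
  assert (C0p : 0 <= C0) by apply HC0.
  assert (nup : forall f, 0 <= nu f) by apply Hnu.
  split; [|split].
  - intros g n. exact (phi_hom G nu Hnu psi Hsc C0 HC0 g n).
  - exists (8 * C0 * nu h0 + 1). split.
    + pose proof (nup h0). nra.
    + apply (qm_from G nu Hnu H HFM psi Hadd C0 h0 HC0 Hh0). pose proof (nup h0). nra. lra.
  - unfold Dqm, lip_const, EHnu.
    destruct (glb_fin (fun C => lip_with G nu psi C) C0 HC0) as [L [EL [PL [LL GL]]]].
    { intros x Hx. apply Hx. }
    destruct (glb_fin (fun x => exists h0, DfH G H H h0 /\ x = nu h0) (nu h0)) as [E [EE [PE [LE GE]]]].
    { eauto. }
    { intros x [h [_ ->]]. auto. }
    destruct (glb_fin (fun C => 0 < C /\ qm_ineq G H phi C) (8 * C0 * nu h0 + 1)) as [D [ED [PD [LD GD]]]].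
    { split. pose proof (nup h0). nra.
      apply (qm_from G nu Hnu H HFM psi Hadd C0 h0 HC0 Hh0). pose proof (nup h0). nra. lra. }
    { intros x [Hx _]. lra. }
    rewrite EL, EE, ED. simpl.
    destruct (Rle_lt_dec D (8 * (L * E))) as [ok|bad]; auto. exfalso.
    set (K := 8 * L + 8 * E + 9).
    assert (Kp : 0 < K) by (unfold K; lra).
    set (eps := Rmin 1 ((D - 8 * (L * E)) / (2 * K))).
    assert (ep : 0 < eps).
    { unfold eps. apply Rmin_glb_lt. lra. apply Rdiv_lt_0_compat; lra. }
    assert (e1 : eps <= 1) by apply Rmin_l.
    assert (e2 : eps * K <= (D - 8 * (L * E)) / 2).
    { assert (eps <= (D - 8 * (L * E)) / (2 * K)) by apply Rmin_r.
      apply Rmult_le_compat_r with (r := K) in H0; [|lra].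
      replace ((D - 8 * (L * E)) / (2 * K) * K) with ((D - 8 * (L * E)) / 2) in H0 by (field; lra).
      lra. }
    destruct (glb_approx _ L eps ep GL) as [l' [Hl' Ll']].
    destruct (glb_approx _ E eps ep GE) as [x [[h1 [Hh1 ->]] Lx]].
    assert (Lle : L <= l') by auto.
    assert (Ele : E <= nu h1) by (apply LE; eauto).
    assert (Dle : D <= 8 * l' * nu h1 + eps).
    { apply LD. split. pose proof (nup h1). assert (0 <= l') by lra. nra.
      apply (qm_from G nu Hnu H HFM psi Hadd l' h1 Hl' Hh1). pose proof (nup h1). assert (0 <= l') by lra. nra. lra. }
    assert (l' * nu h1 <= (L + eps) * (E + eps)).
    { apply Rmult_le_compat; lra. }
    assert (E1 : 8 * ((L + eps) * (E + eps)) + eps <= 8 * (L * E) + eps * K).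
    { unfold K. nra. }
    lra.
Qed.
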